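(* Let $\mathcal{X}=\{1,\dots,n\}$, let $\pi$ be a strictly positive probability distribution on $\mathcal{X}$ and let $P$ be a $\pi$-reversible transition matrix. For every $S\subset\mathcal{X}$ with $S\neq\emptyset,\mathcal{X}$ (and $S'=\mathcal{X}\setminus S$), $$g(S):=\frac{1}{\pi(S)\pi(S')}\sum_{x\in S,\,y\in S'}\pi(x)P(x,y)=f_1(S)-f_2(S)-f_3(S),$$ where $f_1(S)=\frac{1}{\pi(S)\pi(S')}-2$, $f_2(S)=\frac{1}{\pi(S)}\sum_{x,y\in S'}\pi(x)P(x,y)$, $f_3(S)=\frac{1}{\pi(S')}\sum_{x,y\in S}\pi(x)P(x,y)$; moreover each of $f_1,f_2,f_3$ is supermodular on $\{S\subseteq\mathcal{X}:0<\pi(S)<1\}$.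
   Context: $\pi$-reversible means $\pi(x)P(x,y)=\pi(y)P(y,x)$. A set function $f$ is submodular if $f(A\cap B)+f(A\cup B)\le f(A)+f(B)$ for all $A,B$ in its domain, and supermodular if $-f$ is submodular. *)

(* Defs.v *)
From HB Require Import structures.
From mathcomp Require Import all_boot all_order all_algebra.
Set Implicit Arguments. Unset Strict Implicit. Unset Printing Implicit Defensive.
Import Order.TTheory GRing.Theory Num.Theory.
Local Open Scope ring_scope.

(* State space X = 'I_n = {0,...,n-1} (relabelling of {1,...,n}). *)

Definition pos_prob_dist (R : realFieldType) (n : nat) (pi : 'I_n -> R) : Prop :=
  (forall x, 0 < pi x) /\ \sum_(x < n) pi x = 1.

Definition transition_matrix (R : realFieldType) (n : nat) (P : 'M[R]_n) : Prop :=
  (forall x y, 0 <= P x y) /\ (forall x, \sum_(y < n) P x y = 1).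

Definition reversible (R : realFieldType) (n : nat) (pi : 'I_n -> R) (P : 'M[R]_n) : Prop :=
  forall x y, pi x * P x y = pi y * P y x.

Definition piS (R : realFieldType) (n : nat) (pi : 'I_n -> R) (S : {set 'I_n}) : R :=
  \sum_(x in S) pi x.

Definition flow (R : realFieldType) (n : nat) (pi : 'I_n -> R) (P : 'M[R]_n)
  (A B : {set 'I_n}) : R :=
  \sum_(x in A) \sum_(y in B) pi x * P x y.

Definition g_fun (R : realFieldType) (n : nat) (pi : 'I_n -> R) (P : 'M[R]_n)
  (S : {set 'I_n}) : R :=
  (piS pi S * piS pi (~: S))^-1 * flow pi P S (~: S).

Definition f1 (R : realFieldType) (n : nat) (pi : 'I_n -> R) (S : {set 'I_n}) : R :=
  (piS pi S * piS pi (~: S))^-1 - 2.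

Definition f2 (R : realFieldType) (n : nat) (pi : 'I_n -> R) (P : 'M[R]_n)
  (S : {set 'I_n}) : R :=
  (piS pi S)^-1 * flow pi P (~: S) (~: S).

Definition f3 (R : realFieldType) (n : nat) (pi : 'I_n -> R) (P : 'M[R]_n)
  (S : {set 'I_n}) : R :=
  (piS pi (~: S))^-1 * flow pi P S S.

Definition supermodular_on (R : realFieldType) (T : finType)
  (D : {set T} -> Prop) (f : {set T} -> R) : Prop :=
  forall A B, D A -> D B -> D (A :&: B) -> D (A :|: B) ->
    f A + f B <= f (A :&: B) + f (A :|: B).

Definition dom01 (R : realFieldType) (n : nat) (pi : 'I_n -> R) (S : {set 'I_n}) : Prop :=
  0 < piS pi S < 1.

(* Main.v *)
Require Import Defs.
From HB Require Import structures.
From mathcomp Require Import all_boot all_order all_algebra.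
From mathcomp Require Import ring lra.
Import Order.TTheory GRing.Theory Num.Theory.
Local Open Scope ring_scope.

Lemma sum_sub_le (R : realFieldType) (T : finType) (A B : {set T}) (F : T -> R) :
  A \subset B -> (forall x, 0 <= F x) ->
  \sum_(x in A) F x <= \sum_(x in B) F x.
Proof.
move=> AB F0; rewrite [X in _ <= X](bigID (mem A)) /=.
have -> : \sum_(i in B | i \in A) F i = \sum_(i in A) F i.
  apply: eq_bigl => i; rewrite andbC; case iA: (i \in A) => //=.
  by rewrite (subsetP AB).
by rewrite lerDl sumr_ge0.
Qed.

Lemma mk (R : realFieldType) (T : finType) (A : {set T}) (F : T -> R) :
  \sum_(x in A) F x = \sum_x (if x \in A then F x else 0).
Proof. exact: big_mkcond. Qed.

Lemma sum4 (R : realFieldType) (T : finType) (a b c d : T -> R) :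
  (forall i, a i + b i <= c i + d i) ->
  \sum_i a i + \sum_i b i <= \sum_i c i + \sum_i d i.
Proof. move=> h; rewrite -!big_split /=. by apply: ler_sum => i _. Qed.

Lemma sum4e (R : realFieldType) (T : finType) (a b c d : T -> R) :
  (forall i, a i + b i = c i + d i) ->
  \sum_i a i + \sum_i b i = \sum_i c i + \sum_i d i.
Proof. move=> h; rewrite -!big_split /=. by apply: eq_bigr => i _. Qed.

Lemma sum_modular (R : realFieldType) (T : finType) (A B : {set T}) (F : T -> R) :
  \sum_(x in A) F x + \sum_(x in B) F x =
  \sum_(x in A :&: B) F x + \sum_(x in A :|: B) F x.
Proof.
rewrite !mk; apply: sum4e => x; rewrite in_setI in_setU.
by case: (x \in A); case: (x \in B); rewrite /= ?addr0 ?add0r.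
Qed.

Lemma sum_split (R : realFieldType) (T : finType) (S : {set T}) (F : T -> R) :
  \sum_x F x = \sum_(x in S) F x + \sum_(x in ~: S) F x.
Proof.
rewrite (bigID (mem S)) /=; congr (_ + _); apply: eq_bigl => x //.
by rewrite in_setC.
Qed.

Lemma flow_super (R : realFieldType) (n : nat) (pi : 'I_n -> R) (P : 'M[R]_n)
  (A B : {set 'I_n}) : (forall x y, 0 <= pi x * P x y) ->
  flow pi P A A + flow pi P B B <= flow pi P (A :&: B) (A :&: B) + flow pi P (A :|: B) (A :|: B).
Proof.
move=> w0; rewrite /flow.
rewrite !mk; apply: sum4 => x.
have s0 : forall S : {set 'I_n}, 0 <= \sum_(y in S) pi x * P x y.
  by move=> S; apply: sumr_ge0.
have sm : forall S1 S2 : {set 'I_n}, S1 \subset S2 ->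
   \sum_(y in S1) pi x * P x y <= \sum_(y in S2) pi x * P x y.
  by move=> S1 S2 h; apply: sum_sub_le.
rewrite in_setI in_setU.
case xA: (x \in A); case xB: (x \in B); rewrite /= ?addr0 ?add0r //.
- rewrite !mk; apply: sum4 => y; rewrite in_setI in_setU.
  by case: (y \in A); case: (y \in B); rewrite /= ?addr0 ?add0r // lerDr.
- by apply: sm; apply: subsetUl.
- by apply: sm; apply: subsetUr.
Qed.

Lemma flow_mono (R : realFieldType) (n : nat) (pi : 'I_n -> R) (P : 'M[R]_n)
  (A B : {set 'I_n}) : (forall x y, 0 <= pi x * P x y) -> A \subset B ->
  flow pi P A A <= flow pi P B B.
Proof.
move=> w0 AB; rewrite /flow.
apply: (le_trans (y := \sum_(x in A) \sum_(y in B) pi x * P x y)).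
  by apply: ler_sum => x _; apply: sum_sub_le.
by apply: sum_sub_le => // x; apply: sumr_ge0.
Qed.

Lemma inv_conv (R : realFieldType) (x y a b : R) :
  0 < x -> x <= a -> x <= b -> a <= y -> x + y = a + b ->
  a^-1 + b^-1 <= x^-1 + y^-1.
Proof.
move=> x0 xa xb ay e.
have a0 : 0 < a by lra.
have b0 : 0 < b by lra.
have y0 : 0 < y by lra.
have key : x * y <= a * b.
  have -> : b = x + y - a by lra.
  nra.
have -> : a^-1 + b^-1 = (a + b) * (a * b)^-1 by field; lra.
have -> : x^-1 + y^-1 = (x + y) * (x * y)^-1 by field; lra.
rewrite e ler_pM2l; last lra.
by rewrite lef_pV2 ?posrE ?mulr_gt0.
Qed.

Lemma prod_super (R : realFieldType) (fI fA fB fU gI gA gB gU : R) :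
  0 <= fI -> fI <= fA -> fI <= fB -> fA + fB <= fI + fU ->
  0 <= gI -> gI <= gA -> gI <= gB -> gA + gB <= gI + gU ->
  fA * gA + fB * gB <= fI * gI + fU * gU.
Proof.
move=> h1 h2 h3 h4 h5 h6 h7 h8.
have e1 : (fA + fB - fI) * (gA + gB - gI) <= fU * gU.
  apply: (le_trans (y := fU * (gA + gB - gI))).
    by apply: ler_wpM2r; lra.
  by apply: ler_wpM2l; lra.
have e2 : 0 <= (fA - fI) * (gB - gI) + (fB - fI) * (gA - gI).
  by apply: addr_ge0; apply: mulr_ge0; lra.
lra.
Qed.

Section Main.
Variables (R : realFieldType) (n : nat) (pi : 'I_n -> R) (P : 'M[R]_n).
Hypotheses (hpi : pos_prob_dist pi) (hP : transition_matrix P) (hr : reversible pi P).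

Lemma w0 x y : 0 <= pi x * P x y.
Proof. by apply: mulr_ge0; [apply: ltW; apply hpi.1 | apply hP.1]. Qed.

Lemma piC S : piS pi (~: S) = 1 - piS pi S.
Proof. by rewrite -hpi.2 /piS (sum_split _ _ S); lra. Qed.

Lemma piS_pos S : S != set0 -> 0 < piS pi S.
Proof.
case/set0Pn => x xS; rewrite /piS (bigD1 x) //=.
have h := hpi.1 x.
have h2 : 0 <= \sum_(i in S | i != x) pi i.
  by apply: sumr_ge0 => i _; apply: ltW; apply hpi.1.
lra.
Qed.

Lemma piS_mono (A B : {set 'I_n}) : A \subset B -> piS pi A <= piS pi B.
Proof. by move=> h; apply: sum_sub_le => // x; apply: ltW; apply hpi.1. Qed.

Lemma flowSS S : flow pi P S S = piS pi S - flow pi P S (~: S).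
Proof.
suff : flow pi P S S + flow pi P S (~: S) = piS pi S by move=> <-; rewrite addrK.
rewrite /flow /piS -big_split /=; apply: eq_bigr => x _.
by rewrite -(sum_split _ _ S) -mulr_sumr hP.2 mulr1.
Qed.

Lemma flow_sym (S : {set 'I_n}) : flow pi P (~: S) S = flow pi P S (~: S).
Proof.
rewrite /flow exchange_big /=; apply: eq_bigr => y _; apply: eq_bigr => x _.
by rewrite hr.
Qed.

Lemma Cnz (S : {set 'I_n}) : S != setT -> ~: S != set0.
Proof. by apply: contra_neq => h; rewrite -(setCK S) h setC0. Qed.

Lemma identity S : S != set0 -> S != setT ->
  g_fun pi P S = f1 pi S - f2 pi P S - f3 pi P S.
Proof.
move=> h0 hT.
have a0 := piS_pos _ h0.
have b0 := piS_pos _ (Cnz _ hT).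
rewrite /g_fun /f1 /f2 /f3 (flowSS S) (flowSS (~: S)) setCK flow_sym.
move: a0 b0; rewrite piC.
set a := piS pi S; set F := flow pi P S (~: S) => a0 b0.
field; lra.
Qed.

Lemma dom_facts (A B : {set 'I_n}) :
  dom01 pi A -> dom01 pi B -> dom01 pi (A :&: B) -> dom01 pi (A :|: B) ->
  [/\ 0 < piS pi (A :&: B), piS pi (A :|: B) < 1,
      piS pi (A :&: B) <= piS pi A, piS pi (A :&: B) <= piS pi B &
      [/\ piS pi A <= piS pi (A :|: B), piS pi B <= piS pi (A :|: B) &
       piS pi A + piS pi B = piS pi (A :&: B) + piS pi (A :|: B)]].
Proof.
rewrite /dom01 => /andP[? ?] /andP[? ?] /andP[? ?] /andP[? ?]; split => //.
- by apply: piS_mono; apply: subsetIl.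
- by apply: piS_mono; apply: subsetIr.
split.
- by apply: piS_mono; apply: subsetUl.
- by apply: piS_mono; apply: subsetUr.
- by apply: sum_modular.
Qed.

Lemma f1_super : supermodular_on (dom01 pi) (f1 pi).
Proof.
move=> A B dA dB dI dU; have [h1 h2 h3 h4 [h5 h6 h7]] := dom_facts _ _ dA dB dI dU.
rewrite /f1 !piC.
move: h1 h2 h3 h4 h5 h6 h7.
set a := piS pi A; set b := piS pi B; set x := piS pi (A :&: B); set y := piS pi (A :|: B).
move=> h1 h2 h3 h4 h5 h6 h7.
have e : forall t : R, 0 < t < 1 -> (t * (1 - t))^-1 = t^-1 + (1 - t)^-1.
  by move=> t /andP[? ?]; field; lra.
have q1 : a^-1 + b^-1 <= x^-1 + y^-1 by apply: inv_conv.
have q2 : (1 - a)^-1 + (1 - b)^-1 <= (1 - y)^-1 + (1 - x)^-1.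
  by apply: inv_conv; lra.
rewrite !e; try (apply/andP; split; lra).
lra.
Qed.

Lemma f3_super : supermodular_on (dom01 pi) (f3 pi P).
Proof.
move=> A B dA dB dI dU; have [h1 h2 h3 h4 [h5 h6 h7]] := dom_facts _ _ dA dB dI dU.
rewrite /f3 !piC.
have q0 : 0 <= flow pi P (A :&: B) (A :&: B).
  by apply: sumr_ge0 => *; apply: sumr_ge0 => *; apply: w0.
have qa : flow pi P (A :&: B) (A :&: B) <= flow pi P A A.
  by apply: flow_mono; [exact: w0 | exact: subsetIl].
have qb : flow pi P (A :&: B) (A :&: B) <= flow pi P B B.
  by apply: flow_mono; [exact: w0 | exact: subsetIr].
have qs := flow_super _ _ pi P A B w0.
move: h1 h2 h3 h4 h5 h6 h7.
set a := piS pi A; set b := piS pi B; set x := piS pi (A :&: B); set y := piS pi (A :|: B).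
move=> h1 h2 h3 h4 h5 h6 h7.
apply: prod_super => //.
- by rewrite invr_ge0; lra.
- by rewrite lef_pV2 ?posrE; lra.
- by rewrite lef_pV2 ?posrE; lra.
- rewrite [X in _ <= X]addrC; apply: inv_conv; lra.
Qed.

Lemma f2_super : supermodular_on (dom01 pi) (f2 pi P).
Proof.
have e : forall S, f2 pi P S = f3 pi P (~: S) by move=> S; rewrite /f2 /f3 setCK.
have dC : forall S, dom01 pi S -> dom01 pi (~: S).
  by move=> S; rewrite /dom01 piC => /andP[? ?]; apply/andP; split; lra.
move=> A B dA dB dI dU; rewrite !e.
have := f3_super _ _ (dC _ dA) (dC _ dB).
rewrite -setCU -setCI => h; by rewrite [X in _ <= X]addrC; apply: h (dC _ dU) (dC _ dI).
Qed.

End Main.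

Theorem proposition4p13 (R : realFieldType) (n : nat) (pi : 'I_n -> R) (P : 'M[R]_n) :
  pos_prob_dist pi -> transition_matrix P -> reversible pi P ->
  (forall S : {set 'I_n}, S != set0 -> S != setT ->
     g_fun pi P S = f1 pi S - f2 pi P S - f3 pi P S) /\
  supermodular_on (dom01 pi) (f1 pi) /\
  supermodular_on (dom01 pi) (f2 pi P) /\
  supermodular_on (dom01 pi) (f3 pi P).
Proof.
move=> hpi hP hr; split; first exact: identity.
split; first exact: f1_super.
split; first exact: f2_super.
exact: f3_super.
Qed.
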